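(* Consider a system of $M$ conservation laws with state space $\mathcal D\subset\mathbb R^M$, entropy variables $\mathbf v=(v^1,\dots,v^M):\mathcal D\to\mathbb R^M$, entropy flux potential $\Psi:\mathcal D\to\mathbb R$, and an entropy conservative two-point flux $\mathbf f^{\mathrm{EC}}=(f^{\mathrm{EC},1},\dots,f^{\mathrm{EC},M}):\mathcal D\times\mathcal D\to\mathbb R^M$, i.e. $(\mathbf v(\mathbf u_R)-\mathbf v(\mathbf u_L))^T\mathbf f^{\mathrm{EC}}(\mathbf u_L,\mathbf u_R)=\Psi(\mathbf u_R)-\Psi(\mathbf u_L)$ for all $\mathbf u_L,\mathbf u_R$. Let an element $R$ with $N_R+1$ interface nodes, diagonal positive weight matrix $\mathbf M_R$ and edge length $\Delta_R>0$ share its edge with $E\ge1$ elements $L_1,\dots,L_E$, where $L_i$ has $N_{L_i}+1$ interface nodes, diagonal positive weight matrix $\mathbf M_{L_i}$ and edge length $\Delta_{L_i}>0$, $\sum_i\Delta_{L_i}=\Delta_R$. Let $\mathbf P_{L_i2R}\in\mathbb R^{(N_R+1)\times(N_{L_i}+1)}$, $\mathbf P_{R2L_i}\in\mathbb R^{(N_{L_i}+1)\times(N_R+1)}$ satisfy $$\Delta_{L_i}\mathbf P_{R2L_i}^T\mathbf M_{L_i}=\Delta_R\mathbf M_R\mathbf P_{L_i2R},\qquad \mathbf P_{R2L_i}\mathbf 1^R=\mathbf 1^{L_i}\quad(i=1,\dots,E),\qquad \sum_{i=1}^E\mathbf P_{L_i2R}\mathbf 1^{L_i}=\mathbf 1^R.$$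 Given arbitrary states $\mathbf U^{L_i}_k\in\mathcal D$ ($k=0,\dots,N_{L_i}$) and $\mathbf U^R_j\in\mathcal D$ ($j=0,\dots,N_R$), define for $q=1,\dots,M$ the matrices $[\mathbf F^q_{L_i,R}]_{kj}=f^{\mathrm{EC},q}(\mathbf U^{L_i}_k,\mathbf U^R_j)$ and the surface fluxes $$\mathbf F^{q,R}:=\sum_{i=1}^E\mathbb E\big(\mathbf P_{L_i2R}\mathbf F^q_{L_i,R}\big),\qquad \mathbf F^{q,L_i}:=\mathbb E\big(\mathbf P_{R2L_i}(\mathbf F^q_{L_i,R})^T\big).$$ With $V^{q,L_i}_k=v^q(\mathbf U^{L_i}_k)$, $\Psi^{L_i}_k=\Psi(\mathbf U^{L_i}_k)$, $V^{q,R}_j=v^q(\mathbf U^R_j)$, $\Psi^R_j=\Psi(\mathbf U^R_j)$, one has for every $q$ $$\Delta U^q:=\Delta_R(\mathbf 1^R)^T\mathbf M_R\mathbf F^{q,R}-\sum_{i=1}^E\Delta_{L_i}(\mathbf 1^{L_i})^T\mathbf M_{L_i}\mathbf F^{q,L_i}=0$$ and $$\Delta S:=\Delta_R\Big(\sum_{q=1}^M(\mathbf V^{q,R})^T\mathbf M_R\mathbf F^{q,R}-(\mathbf 1^R)^T\mathbf M_R\boldsymbol\Psi^R\Big)-\sum_{i=1}^E\Delta_{L_i}\Big(\sum_{q=1}^M(\mathbf V^{q,L_i})^T\mathbf M_{L_i}\mathbf F^{q,L_i}-(\mathbf 1^{L_i})^T\mathbf M_{L_i}\boldsymbol\Psi^{L_i}\Big)=0,$$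 i.e. the fluxes are primary and entropy conservative.
   Context: Setting: a nodal discontinuous Galerkin spectral element method on Legendre–Gauss–Lobatto nodes (summation-by-parts operators) on a rectangular mesh with hanging nodes ($h$ refinement) and possibly differing polynomial degrees; a hyperbolic system with strongly convex entropy $S$, entropy variables $\mathbf v=\partial S/\partial\mathbf u$, entropy flux $F$, and potential $\Psi=\mathbf v\cdot\mathbf f-F$ where $\mathbf f$ is the interface-normal flux. Here one large element $R$ is adjacent across one edge to $E$ smaller elements $L_1,\dots,L_E$ stacked along that edge. $\Delta U^q$ and $\Delta S$ are (up to a common positive factor) the contributions of this interface to the time rate of change of the total integral of the $q$-th conserved variable and of the total entropy when entropy conservative volume fluxes are used; ''primary and entropy conservative'' means they vanish. Notation: $\mathbb E(\mathbf W)$ is the vector of diagonal entries of a square matrix $\mathbf W$; $\mathbf 1^R,\mathbf 1^{L_i}$ are all-ones vectors of the appropriate sizes. *)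

(* Defs.v *)
From HB Require Import structures.
From mathcomp Require Import all_boot all_order all_algebra.
Set Implicit Arguments. Unset Strict Implicit. Unset Printing Implicit Defensive.
Import Order.TTheory GRing.Theory Num.Theory.
Local Open Scope ring_scope.

(* E(W): column vector of the diagonal entries of a square matrix W *)
Definition diagv (R : nzRingType) (n : nat) (W : 'M[R]_n) : 'cV[R]_n :=
  \col_(j < n) W j j.

Definition ones (R : nzRingType) (n : nat) : 'cV[R]_n := const_mx 1.

Definition pos_diag (R : numDomainType) (n : nat) (W : 'M[R]_n) : Prop :=
  is_diag_mx W /\ forall j, 0 < W j j.

(* Main.v *)
Require Import Defs.
From HB Require Import structures.
From mathcomp Require Import all_boot all_order all_algebra.
From mathcomp Require Import ring.
Import Order.TTheory GRing.Theory Num.Theory.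
Local Open Scope ring_scope.

Theorem corollary1 (R : realFieldType) (M : nat)
  (D : pred 'rV[R]_M) (v : 'rV[R]_M -> 'rV[R]_M) (Psi : 'rV[R]_M -> R)
  (fEC : 'rV[R]_M -> 'rV[R]_M -> 'rV[R]_M)
  (hEC : forall uL uR, D uL -> D uR ->
     \sum_(q < M) (v uR 0 q - v uL 0 q) * fEC uL uR 0 q = Psi uR - Psi uL)
  (E : nat) (hE : (0 < E)%N)
  (NR : nat) (MR : 'M[R]_NR.+1) (DR : R)
  (NL : 'I_E -> nat) (ML : forall i, 'M[R]_((NL i).+1)) (DL : 'I_E -> R)
  (hMR : pos_diag MR) (hML : forall i, pos_diag (ML i))
  (hDR : 0 < DR) (hDL : forall i, 0 < DL i)
  (hDsum : \sum_(i < E) DL i = DR)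
  (PL2R : forall i, 'M[R]_(NR.+1, (NL i).+1))
  (PR2L : forall i, 'M[R]_((NL i).+1, NR.+1))
  (hSBP : forall i, DL i *: ((PR2L i)^T *m ML i) = DR *: (MR *m PL2R i))
  (hR2L : forall i, PR2L i *m ones R NR.+1 = ones R (NL i).+1)
  (hL2R : \sum_(i < E) PL2R i *m ones R (NL i).+1 = ones R NR.+1)
  (UL : forall i, 'I_((NL i).+1) -> 'rV[R]_M) (UR : 'I_NR.+1 -> 'rV[R]_M)
  (hUL : forall i k, D (UL i k)) (hUR : forall j, D (UR j)) :
  let F := fun (q : 'I_M) (i : 'I_E) =>
    \matrix_(k < (NL i).+1, j < NR.+1) fEC (UL i k) (UR j) 0 q in
  let FR := fun q => \sum_(i < E) diagv (PL2R i *m F q i) in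
  let FL := fun q i => diagv (PR2L i *m (F q i)^T) in
  let VR := fun (q : 'I_M) => \col_(j < NR.+1) v (UR j) 0 q in
  let VL := fun (q : 'I_M) i => \col_(k < (NL i).+1) v (UL i k) 0 q in
  let PsiR := \col_(j < NR.+1) Psi (UR j) in
  let PsiL := fun i => \col_(k < (NL i).+1) Psi (UL i k) in
  (forall q : 'I_M,
     DR * ((ones R NR.+1)^T *m MR *m FR q) 0 0
     - \sum_(i < E) DL i * ((ones R (NL i).+1)^T *m ML i *m FL q i) 0 0 = 0)
  /\
  DR * (\sum_(q < M) ((VR q)^T *m MR *m FR q) 0 0
        - ((ones R NR.+1)^T *m MR *m PsiR) 0 0)
  - \sum_(i < E) DL i * (\sum_(q < M) ((VL q i)^T *m ML i *m FL q i) 0 0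
        - ((ones R (NL i).+1)^T *m ML i *m PsiL i) 0 0) = 0.
Proof.
move=> F FR FL VR VL PsiR PsiL.
have quad : forall n (W : 'M[R]_n.+1) (u x : 'cV[R]_n.+1), is_diag_mx W ->
    (u^T *m W *m x) 0 0 = \sum_j u j 0 * W j j * x j 0.
  move=> n W u x /is_diag_mxP dW; rewrite mxE; apply: eq_bigr => j _.
  rewrite mxE (bigD1 j) //= big1 ?addr0 ?mxE //.
  by move=> k kj; rewrite mxE dW ?mulr0 // eq_sym.
have onesE : forall n (j : 'I_n), ones R n j 0 = 1 by move=> n j; rewrite mxE.
have A : forall i j k, DL i * (PR2L i k j * ML i k k) = DR * (MR j j * PL2R i j k).
  move=> i j k; have := congr1 (fun X : 'M[R]_(NR.+1, (NL i).+1) => X j k) (hSBP i); rewrite !mxE.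
  case: (hML i) => /is_diag_mxP dL _; case: hMR => /is_diag_mxP dR _.
  rewrite (bigD1 k) //= big1 ?addr0; last by move=> k' kk; rewrite dL ?mulr0.
  rewrite (bigD1 j) //= big1 ?addr0; last by move=> j' jj; rewrite dR ?mul0r // eq_sym.
  by rewrite mxE.
have L2R : forall j, \sum_i \sum_k PL2R i j k = 1.
  move=> j; have := congr1 (fun X : 'cV[R]_NR.+1 => X j 0) hL2R; rewrite summxE onesE => <-.
  by apply: eq_bigr => i _; rewrite mxE; apply: eq_bigr => k _; rewrite onesE mulr1.
have R2L : forall i k, \sum_j PR2L i k j = 1.
  move=> i k; have := congr1 (fun X : 'cV[R]_(NL i).+1 => X k 0) (hR2L i); rewrite onesE => <-.
  by rewrite mxE; apply: eq_bigr => j _; rewrite onesE mulr1.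
have FRE : forall q j, FR q j 0 = \sum_i \sum_k PL2R i j k * fEC (UL i k) (UR j) 0 q.
  move=> q j; rewrite /FR summxE; apply: eq_bigr => i _; rewrite !mxE.
  by apply: eq_bigr => k _; rewrite mxE.
have FLE : forall q i k, FL q i k 0 = \sum_j PR2L i k j * fEC (UL i k) (UR j) 0 q.
  move=> q i k; rewrite /FL !mxE.
  by apply: eq_bigr => j _; rewrite !mxE.
have mRd : is_diag_mx MR by case: hMR.
have mLd : forall i, is_diag_mx (ML i) by move=> i; case: (hML i).
set c := fun i j k => DR * (MR j j * PL2R i j k).
have Key : forall q (x : 'I_NR.+1 -> R), DR * (\sum_j x j * MR j j * FR q j 0) =
   \sum_i \sum_j \sum_k c i j k * (x j * fEC (UL i k) (UR j) 0 q).
  move=> q x; rewrite big_distrr exchange_big /=; apply: eq_bigr => j _.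
  rewrite FRE big_distrr big_distrr /=; apply: eq_bigr => i _.
  rewrite big_distrr big_distrr /=; apply: eq_bigr => k _.
  by rewrite /c; ring.
have Key2 : forall q i (y : 'I_(NL i).+1 -> R),
   DL i * (\sum_k y k * ML i k k * FL q i k 0) =
   \sum_j \sum_k c i j k * (y k * fEC (UL i k) (UR j) 0 q).
  move=> q i y; rewrite big_distrr exchange_big /=; apply: eq_bigr => k _.
  rewrite FLE big_distrr big_distrr /=; apply: eq_bigr => j _.
  by rewrite /c -A; ring.
split.
  move=> q; rewrite quad // (Key q (fun j => ones R NR.+1 j 0)).
  under [X in _ - X = _]eq_bigr => i _ do rewrite quad // (Key2 q i (fun k => ones R (NL i).+1 k 0)).
  apply/eqP; rewrite subr_eq0; apply/eqP.
  apply: eq_bigr => i _; apply: eq_bigr => j _; apply: eq_bigr => k _.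
  by rewrite !onesE.
have Key3 : forall (x z : 'I_NR.+1 -> R), DR * (\sum_j x j * MR j j * z j) =
   \sum_i \sum_j \sum_k c i j k * (x j * z j).
  move=> x z; rewrite big_distrr exchange_big /=; apply: eq_bigr => j _.
  transitivity (DR * (x j * MR j j * z j) * (\sum_i \sum_k PL2R i j k)).
    by rewrite L2R mulr1.
  rewrite big_distrr /=; apply: eq_bigr => i _.
  rewrite big_distrr /=; apply: eq_bigr => k _.
  by rewrite /c; ring.
have Key4 : forall i (y z : 'I_(NL i).+1 -> R),
   DL i * (\sum_k y k * ML i k k * z k) =
   \sum_j \sum_k c i j k * (y k * z k).
  move=> i y z; rewrite big_distrr exchange_big /=; apply: eq_bigr => k _.
  transitivity (DL i * (y k * ML i k k * z k) * (\sum_j PR2L i k j)).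
    by rewrite R2L mulr1.
  rewrite big_distrr /=; apply: eq_bigr => j _.
  by rewrite /c -A; ring.
have swapq : forall i (G : 'I_M -> 'I_NR.+1 -> 'I_(NL i).+1 -> R),
   \sum_q \sum_j \sum_k G q j k = \sum_j \sum_k \sum_q G q j k.
  by move=> i G; rewrite exchange_big; apply: eq_bigr => j _; exact: exchange_big.
rewrite quad // mulrBr big_distrr /=.
under eq_bigr => q _ do rewrite quad // (Key q (fun j => VR q j 0)).
rewrite (Key3 (fun j => ones R NR.+1 j 0) (fun j => PsiR j 0)).
under [X in _ - _ - X]eq_bigr => i _ do rewrite mulrBr big_distrr /=.
rewrite sumrB.
under [X in _ - _ - (X - _)]eq_bigr => i _ do
  (under eq_bigr => q _ do rewrite quad // (Key2 q i (fun k => VL q i k 0))).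
under [X in _ - _ - (_ - X)]eq_bigr => i _ do
  rewrite quad // (Key4 i (fun k => ones R (NL i).+1 k 0) (fun k => PsiL i k 0)).
rewrite [X in X - _ - _]exchange_big /=.
rewrite -!sumrB; apply: big1 => i _.
rewrite !swapq -!sumrB; apply: big1 => j _.
rewrite -!sumrB; apply: big1 => k _.
rewrite -!mulr_sumr !onesE !mxE !mul1r.
have h := hEC (UL i k) (UR j) (hUL i k) (hUR j).
have h' : \sum_q VR q j 0 * fEC (UL i k) (UR j) 0 q =
   \sum_q VL q i k 0 * fEC (UL i k) (UR j) 0 q + Psi (UR j) - Psi (UL i k).
  rewrite -addrA -h -big_split /=; apply: eq_bigr => q _; rewrite !mxE; ring.
rewrite h'; ring.
Qed.
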